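(* Let $n\geq 2$ and let $\mathbf{TP}(\alpha_2,\dots,\alpha_n)$ and $\mathbf{TP}'(\alpha_2',\dots,\alpha_n')$ be isomorphic transposed Poisson algebras. Then there exists an automorphism $\varphi$ of the associative algebra $\mu_0^n$, with parameters $A_1,\dots,A_n\in\mathbb{C}$, $A_1\neq 0$, such that for every $2\leq t\leq n$: \[ \sum_{i=2}^{t}\sum_{k_1+\cdots+k_i=t}A_{k_1}\cdots A_{k_i}\,\alpha_i'=\sum_{j=2}^{t}\sum_{i=1}^{t-j+1}\sum_{k_1+k_2=t-i-j+3}(t-2i-j+3)\,A_iA_{k_1}A_{k_2}\,\alpha_j, \] where the inner sums run over positive integers $k_1,k_2,\dots$.
   Context: $\mu_0^n$ is the complex commutative associative algebra with basis $\{e_1,\dots,e_n\}$ and $e_i\cdot e_j=e_{i+j}$ for $2\leq i+j\leq n$, other products zero. Every automorphism $\varphi$ of $\mu_0^n$ has the form $\varphi(e_1)=\sum_{i=1}^nA_ie_i$ and $\varphi(e_i)=\sum_{j=i}^n\sum_{k_1+\cdots+k_i=j}A_{k_1}\cdots A_{k_i}e_j$ for $2\leq i\leq n$, with $A_1\neq0$; $A_1,\dots,A_n$ are called its parameters. For $\alpha_2,\dots,\alpha_n\in\mathbb{C}$, $\mathbf{TP}(\alpha_2,\dots,\alpha_n)$ denotes $\mu_0^n$ with its associative product together with the bracket $[e_i,e_j]=(j-i)\sum_{t=i+j-1}^{n}\alpha_{t-i-j+3}e_t$ for $3\leq i+j\leq n+1$, other brackets of basis elements zero; it is a transposed Poisson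 algebra (commutative associative product, Lie bracket, and $2z\cdot[x,y]=[z\cdot x,y]+[x,z\cdot y]$). Isomorphisms preserve both operations. *)

(* Defs.v *)
From HB Require Import structures.
From mathcomp Require Import all_boot all_order all_algebra.
From mathcomp Require Import reals Rstruct complex.
Set Implicit Arguments. Unset Strict Implicit. Unset Printing Implicit Defensive.
Import Order.TTheory GRing.Theory Num.Theory.
Local Open Scope ring_scope.

Notation CC := (complex Rdefinitions.R).

(* mu_0^n is modelled on the row space 'rV[CC]_n; coordinate j : 'I_n of a
   vector is its coefficient on the basis vector e_{j+1}. *)
Definition V (n : nat) := 'rV[CC]_n.

(* basis vector e_k (k : nat); e_k = 0 unless 1 <= k <= n *)
Definition e (n k : nat) : V n := \row_(j < n) (j.+1 == k)%:R.

Definition mulA (n : nat) (x y : V n) : V n :=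
  \sum_(i < n) \sum_(j < n) (x 0 i * y 0 j) *: e n (i.+1 + j.+1)%N.

Definition brE (n : nat) (alpha : nat -> CC) (i j : nat) : V n :=
  if ((3 <= i + j) && (i + j <= n.+1))%N then
    ((j%:R - i%:R) : CC) *:
      \sum_(t < n.+1 | (i + j - 1 <= t)%N) alpha (t + 3 - (i + j))%N *: e n t
  else 0.

Definition brTP (n : nat) (alpha : nat -> CC) (x y : V n) : V n :=
  \sum_(i < n) \sum_(j < n) (x 0 i * y 0 j) *: brE n alpha i.+1 j.+1.

Definition is_linear_map (n : nat) (f : V n -> V n) : Prop :=
  forall (a : CC) (x y : V n), f (a *: x + y) = a *: f x + f y.

Definition is_mu_automorphism (n : nat) (f : V n -> V n) : Prop :=
  [/\ is_linear_map f, bijective f &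
      forall x y : V n, f (mulA x y) = mulA (f x) (f y)].

Definition is_TP_isomorphism (n : nat) (alpha alpha' : nat -> CC)
    (f : V n -> V n) : Prop :=
  [/\ is_linear_map f, bijective f,
      forall x y : V n, f (mulA x y) = mulA (f x) (f y) &
      forall x y : V n, f (brTP alpha x y) = brTP alpha' (f x) (f y)].

Definition TP_isomorphic (n : nat) (alpha alpha' : nat -> CC) : Prop :=
  exists f : V n -> V n, is_TP_isomorphism alpha alpha' f.

Definition compSum (A : nat -> CC) (i t : nat) : CC :=
  \sum_(k : {ffun 'I_i -> 'I_t.+1} |
          [forall m, (0 < (k m : nat))%N] && ((\sum_(m < i) (k m : nat))%N == t))
     \prod_(m < i) A (k m).

(* Main.v *)
Require Import Defs.
Set Warnings "-notation-overridden -ambiguous-paths -notation-incompatible-prefix".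
From HB Require Import structures.
From mathcomp Require Import all_boot all_order all_algebra.
From mathcomp Require Import reals Rstruct complex.
From mathcomp Require Import ring zify.
Import GRing.Theory.
Local Open Scope ring_scope.

Definition pol n (x : V n) : {poly CC} := \sum_(j < n) x 0 j *: 'X^(j.+1).
Arguments pol {n}.

Lemma coef_pol n (x : V n) k : (pol x)`_k = \sum_(j < n) x 0 j * (k == j.+1)%:R.
Proof. by rewrite /pol coef_sum; apply: eq_bigr => j _; rewrite coefZ coefXn. Qed.

Lemma coef_pol_ord n (x : V n) (j : 'I_n) : (pol x)`_j.+1 = x 0 j.
Proof.
rewrite coef_pol (bigD1 j) //= eqxx mulr1 big1 ?addr0 // => i hi.
rewrite eqSS; case: eqP => [h|]; last by rewrite mulr0.
by case/eqP: hi; apply: val_inj.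
Qed.

Lemma coef_pol0 n (x : V n) : (pol x)`_0 = 0.
Proof. by rewrite coef_pol big1 // => j _; rewrite mulr0. Qed.

Lemma polD n (x y : V n) : pol (x + y) = pol x + pol y.
Proof. by rewrite /pol -big_split; apply: eq_bigr => j _; rewrite mxE scalerDl. Qed.

Lemma polZ n a (x : V n) : pol (a *: x) = a *: pol x.
Proof. by rewrite /pol scaler_sumr; apply: eq_bigr => j _; rewrite mxE scalerA. Qed.

Lemma pol0 n : pol (0 : V n) = 0.
Proof. by rewrite /pol big1 // => j _; rewrite mxE scale0r. Qed.

Lemma pol_sum n (I : Type) (r : seq I) (P : pred I) (F : I -> V n) :
  pol (\sum_(i <- r | P i) F i) = \sum_(i <- r | P i) pol (F i).
Proof. exact: (big_morph _ (@polD n) (@pol0 n)). Qed.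

Lemma coef_pol_e n m t : (0 < m)%N -> (t <= n)%N -> (pol (e n m))`_t = (m == t)%:R.
Proof.
move=> m0 tn; rewrite coef_pol.
case: t tn => [|t] tn.
  by rewrite big1 ?(eq_sym 0%N) ?gtn_eqF // => j _; rewrite mulr0.
rewrite (bigD1 (Ordinal tn)) //= eqxx mulr1 big1 ?addr0; last first.
  move=> j hj; rewrite eqSS; case: eqP => [h|]; last by rewrite mulr0.
  by case/eqP: hj; apply: val_inj.
by rewrite mxE eq_sym.
Qed.

Lemma lin0 n (f : V n -> V n) : is_linear_map f -> f 0 = 0.
Proof.
move=> hf; have h := hf 1 0 0; rewrite !scale1r addr0 in h.
by apply: (addrI (f 0)); rewrite addr0 -h.
Qed.

Lemma linD n (f : V n -> V n) : is_linear_map f -> forall x y, f (x + y) = f x + f y.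
Proof. by move=> hf x y; rewrite -[x]scale1r hf !scale1r. Qed.

Lemma linZ n (f : V n -> V n) : is_linear_map f -> forall a x, f (a *: x) = a *: f x.
Proof. by move=> hf a x; rewrite -[a *: x]addr0 hf lin0 // addr0. Qed.

Lemma lin_sum n (f : V n -> V n) : is_linear_map f ->
  forall (I : Type) (r : seq I) (P : pred I) (F : I -> V n),
  f (\sum_(i <- r | P i) F i) = \sum_(i <- r | P i) f (F i).
Proof. by move=> hf; apply: big_morph; [exact: linD | exact: lin0]. Qed.

Lemma rowdec n (x : V n) : x = \sum_(i < n) x 0 i *: e n i.+1.
Proof.
apply/rowP => k; rewrite summxE (bigD1 k) //= !mxE eqxx mulr1 big1 ?addr0 //.
move=> i hi; rewrite !mxE eqSS; case: eqP => [h|]; last by rewrite mulr0.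
by case/eqP: hi; apply: val_inj.
Qed.

Lemma coef_mulA n (x y : V n) t : (t <= n)%N ->
  (pol (Defs.mulA x y))`_t = (pol x * pol y)`_t.
Proof.
move=> tn; rewrite /Defs.mulA pol_sum coef_sum [pol x]/pol mulr_suml coef_sum.
apply: eq_bigr => a _; rewrite pol_sum coef_sum [pol y]/pol mulr_sumr coef_sum.
apply: eq_bigr => b _; rewrite polZ coefZ coef_pol_e //.
rewrite -scalerAl -scalerAr scalerA -scalerAl scalerA -exprD coefZ coefXn eq_sym [y 0 b * _]mulrC.
by [].
Qed.

Lemma mulA_e1 n i : (0 < i <= n)%N -> Defs.mulA (e n 1) (e n i) = e n i.+1.
Proof.
case/andP=> i0 iN.
have n0 : (0 < n)%N by apply: leq_trans iN.
have ii : (i.-1 < n)%N by rewrite prednK.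
rewrite /Defs.mulA (bigD1 (Ordinal n0)) //= [X in _ + X]big1 ?addr0; last first.
  move=> a ha; apply: big1 => b _; rewrite !mxE eqSS.
  case: eqP => [h|]; last by rewrite mul0r scale0r.
  by case/eqP: ha; apply: val_inj.
rewrite (bigD1 (Ordinal ii)) //= big1 ?addr0; last first.
  move=> b hb; rewrite !mxE; case: (b.+1 =P i) => [h|]; last by rewrite mulr0 scale0r.
  case/eqP: hb; apply: val_inj => /=; rewrite -h; lia.
by rewrite !mxE /= prednK // eqxx mulr1 scale1r add1n.
Qed.

Lemma coef_pow_gt (Q : {poly CC}) s t : Q`_0 = 0 -> (t < s)%N -> (Q ^+ s)`_t = 0.
Proof.
move=> Q0; elim: s t => [//|s IH] t ts.
rewrite exprS coefM big1 // => [[a ha]] _ /=.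
case: a ha => [|a] ha; first by rewrite Q0 mul0r.
by rewrite IH ?mulr0 //; lia.
Qed.

Lemma sum_restrict (F : nat -> CC) m k p : (m <= k <= p)%N ->
  (forall i, (k <= i < p)%N -> F i = 0) ->
  \sum_(m <= i < p) F i = \sum_(m <= i < k) F i.
Proof.
case/andP=> mk kp h; rewrite (big_cat_nat mk kp) /=.
by rewrite [X in _ + X]big_nat_cond [X in _ + X]big1 ?addr0 // => i /andP[/h].
Qed.

Lemma sum_restrict_low (F : nat -> CC) m k p : (m <= k <= p)%N ->
  (forall i, (m <= i < k)%N -> F i = 0) ->
  \sum_(m <= i < p) F i = \sum_(k <= i < p) F i.
Proof.
case/andP=> mk kp h; rewrite (big_cat_nat mk kp) /=.
by rewrite [X in X + _]big_nat_cond [X in X + _]big1 ?add0r // => i /andP[/h].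
Qed.

Lemma compSum_coef (Q : {poly CC}) i t : Q`_0 = 0 ->
  compSum (fun k => Q`_k) i t = (Q ^+ i)`_t.
Proof.
move=> Q0.
set P := \poly_(k < t.+1) Q`_k.
have -> : (Q ^+ i)`_t = (P ^+ i)`_t.
  apply/eqP; rewrite -subr_eq0 -coefB subrXX coefM big1 // => [[a ha]] _ /=.
  by rewrite coefB coef_poly ha subrr mul0r.
have -> : P ^+ i = \prod_(m < i) P by rewrite prodr_const card_ord.
rewrite /P poly_def bigA_distr_bigA coef_sum /compSum big_mkcond /=.
apply: eq_bigr => k _.
rewrite [in RHS](eq_bigr (fun m => (Q`_(k m))%:P * 'X^(k m))); last by move=> m _; rewrite mul_polyC.
rewrite big_split /= -rmorph_prod prodrXr coefCM coefXn.
case: (boolP [forall m, (0 < (k m : nat))%N]) => /= hpos.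
  by rewrite eq_sym; case: eqP => _; rewrite ?mulr1 ?mulr0.
move: hpos; rewrite negb_forall => /existsP [m hm].
rewrite (bigD1 m) //= (_ : (k m : nat) = 0%N) ?Q0 ?mul0r //; lia.
Qed.

Lemma pow_coef n (g : V n -> V n) : is_linear_map g ->
  (forall x y, g (Defs.mulA x y) = Defs.mulA (g x) (g y)) ->
  forall i, (0 < i <= n)%N -> forall s, (s <= n)%N ->
  (pol (g (e n i)))`_s = (pol (g (e n 1)) ^+ i)`_s.
Proof.
move=> gl gm; elim=> [//|i IH] /andP[_ iN] s sn.
case: i IH iN => [|i] IH iN; first by rewrite expr1.
rewrite -(@mulA_e1 n i.+1); last by apply: ltnW.
rewrite gm coef_mulA // exprS !coefM.
apply: eq_bigr => [[a ha]] _ /=; rewrite IH //; last lia.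
by apply: ltnW.
Qed.

Lemma coef_brE n al a b t : (0 < a)%N -> (0 < b)%N -> (0 < t <= n)%N ->
  (pol (brE n al a b))`_t =
  if (a + b <= t.+1)%N then (b%:R - a%:R) * al (t + 3 - (a + b))%N else 0.
Proof.
move=> a0 b0 /andP[t0 tn]; rewrite /brE.
case: ifP => [/andP[h3 hn]|hc].
  rewrite polZ coefZ pol_sum coef_sum.
  rewrite (eq_bigr (fun s : 'I_n.+1 => al (s + 3 - (a+b))%N * (s == t :> nat)%:R)); last first.
    move=> s hs; rewrite polZ coefZ coef_pol_e //; lia.
  have tn' : (t < n.+1)%N by [].
  case: ifP => hab.
    rewrite (bigD1 (Ordinal tn')) /=; last lia.
    rewrite eqxx mulr1 big1 ?addr0 // => s /andP[_ hs].
    case: (s =P t :> nat) => [h|]; last by rewrite mulr0.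
    by case/eqP: hs; apply: val_inj.
  rewrite big1 ?mulr0 // => s hs.
  case: (s =P t :> nat) => [h|]; last by rewrite mulr0.
  move: hs hab; rewrite h => h1 /negbT h2; exfalso; lia.
rewrite pol0 coef0; case: ifP => // hab.
have [-> ->] : a = 1%N /\ b = 1%N.
  move/negbT: hc; rewrite negb_and -!ltnNge; lia.
by rewrite subrr mul0r.
Qed.

Lemma brTP_e12 n al : (1 < n)%N -> brTP al (e n 1) (e n 2) = brE n al 1 2.
Proof.
move=> n1; have n0 : (0 < n)%N by apply: ltnW.
rewrite /brTP (bigD1 (Ordinal n0)) //= [X in _ + X]big1 ?addr0; last first.
  move=> a ha; apply: big1 => b _; rewrite !mxE eqSS.
  case: eqP => [h|]; last by rewrite mul0r scale0r.
  by case/eqP: ha; apply: val_inj.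
rewrite (bigD1 (Ordinal n1)) //= [X in _ + X]big1 ?addr0; last first.
  move=> b hb; rewrite !mxE; case: (b.+1 =P 2%N) => [h|]; last by rewrite mulr0 scale0r.
  case/eqP: hb; apply: val_inj => /=; lia.
by rewrite !mxE /= mulr1 scale1r.
Qed.

Lemma coef_brTP n al (x y : V n) t : (0 < t <= n)%N ->
  (pol (brTP al x y))`_t = \sum_(a < n) \sum_(b < n) x 0 a * y 0 b *
     (if (a.+1 + b.+1 <= t.+1)%N
      then (b.+1%:R - a.+1%:R) * al (t + 3 - (a.+1 + b.+1))%N else 0).
Proof.
move=> ht; rewrite /brTP pol_sum coef_sum; apply: eq_bigr => a _.
rewrite pol_sum coef_sum; apply: eq_bigr => b _.
by rewrite polZ coefZ coef_brE.
Qed.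

Lemma shift1 (G : nat -> CC) n : \sum_(1 <= a < n.+1) G a = \sum_(a < n) G a.+1.
Proof. by rewrite big_add1 /= big_mkord. Qed.

Lemma reindex (A Y al : nat -> CC) n t : (2 <= t <= n)%N -> Y 1%N = 0 ->
  \sum_(a < n) \sum_(b < n) A a.+1 * Y b.+1 *
     (if (a.+1 + b.+1 <= t.+1)%N
      then (b.+1%:R - a.+1%:R) * al (t + 3 - (a.+1 + b.+1))%N else 0)
  = \sum_(2 <= j < t.+1) \sum_(1 <= i < (t - j + 1).+1)
      ((t + 3)%:R - (2 * i + j)%:R) * A i * Y (t + 3 - (i + j))%N * al j.
Proof.
move=> /andP[t2 tn] Y1.
set K := fun a b => A a * Y b *
     (if (a + b <= t.+1)%N then (b%:R - a%:R) * al (t + 3 - (a + b))%N else 0).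
set G := fun a b => A a * Y b * ((b%:R - a%:R) * al (t + 3 - (a + b))%N).
set H := fun i j => ((t + 3)%:R - (2 * i + j)%:R) * A i * Y (t + 3 - (i + j))%N * al j.
have -> : \sum_(a < n) \sum_(b < n) A a.+1 * Y b.+1 *
     (if (a.+1 + b.+1 <= t.+1)%N
      then (b.+1%:R - a.+1%:R) * al (t + 3 - (a.+1 + b.+1))%N else 0)
   = \sum_(1 <= i < t.+1) \sum_(2 <= b < t.+2 - i) G i b.
  transitivity (\sum_(1 <= a < n.+1) \sum_(1 <= b < n.+1) K a b).
    rewrite shift1; apply: eq_bigr => a _; by rewrite shift1.
  rewrite (@sum_restrict _ 1 t.+1); last first.
  - move=> a /andP[ha _]; rewrite big_nat_cond big1 // => b /andP[/andP[hb _] _].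
    by rewrite /K ifF ?mulr0 //; apply/negbTE; rewrite -ltnNge; lia.
  - lia.
  apply: eq_big_nat => a /andP[ha1 ha2].
  rewrite (@sum_restrict _ 1 (t.+2 - a)); last first.
  - move=> b /andP[hb _]; by rewrite /K ifF ?mulr0 //; apply/negbTE; rewrite -ltnNge; lia.
  - lia.
  rewrite (@sum_restrict_low _ 1 2); last first.
  - move=> b hb; have -> : b = 1%N by lia.
    by rewrite /K Y1 mulr0 mul0r.
  - lia.
  apply: eq_big_nat => b hb; rewrite /K /G ifT //; lia.
symmetry.
transitivity (\sum_(2 <= j < t.+1) \sum_(1 <= i < t.+1)
                 (if (i < t - j + 2)%N then H i j else 0)).
  apply: eq_big_nat => j hj.
  rewrite [RHS](@sum_restrict _ 1 (t - j + 1).+1); last first.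
  - move=> i hi; rewrite ifF //; apply/negbTE; rewrite -leqNgt; lia.
  - lia.
  apply: eq_big_nat => i hi; rewrite ifT //; lia.
rewrite exchange_big_nat; apply: eq_big_nat => i hi.
rewrite (@sum_restrict _ 2 (t.+2 - i)); last first.
- move=> j hj; rewrite ifF //; apply/negbTE; rewrite -leqNgt; lia.
- lia.
rewrite (eq_big_nat _ _ (F2 := H i)); last by move=> j hj; rewrite ifT //; lia.
rewrite big_nat_rev; apply: eq_big_nat => j hj.
rewrite /H /G.
have -> : (t + 3 - (i + (2 + (t.+2 - i) - j.+1)) = j)%N by lia.
have -> : (2 + (t.+2 - i) - j.+1 = t + 3 - (i + j))%N by lia.
have -> : (2 * i + (t + 3 - (i + j)) = (t + 3 + i) - j)%N by lia.
rewrite natrB; last lia.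
rewrite !natrD; ring.
Qed.

Theorem mainTheorem6 (n : nat) (alpha alpha' : nat -> CC) :
  (2 <= n)%N ->
  TP_isomorphic n alpha alpha' ->
  exists (phi : V n -> V n) (A : nat -> CC),
    [/\ is_mu_automorphism phi,
        A 1%N != 0,
        phi (e n 1) = \sum_(i < n) A i.+1 *: e n i.+1 &
        forall t : nat, (2 <= t <= n)%N ->
          \sum_(2 <= i < t.+1) compSum A i t * alpha' i =
          \sum_(2 <= j < t.+1) \sum_(1 <= i < (t - j + 1).+1)
             ((t + 3)%:R - (2 * i + j)%:R) * A i * compSum A 2 (t + 3 - (i + j))
               * alpha j].
Proof.
move=> n2 [f [fl [g fg gf] fm fb]].
have n0 : (0 < n)%N by apply: ltnW.
have gl : is_linear_map g.
  by move=> a x y; apply: (can_inj fg); rewrite gf fl !gf.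
have gm : forall x y, g (Defs.mulA x y) = Defs.mulA (g x) (g y).
  by move=> x y; apply: (can_inj fg); rewrite gf fm !gf.
have gb : forall x y, g (brTP alpha' x y) = brTP alpha (g x) (g y).
  by move=> x y; apply: (can_inj fg); rewrite gf fb !gf.
set Q := pol (g (e n 1)).
have Q0 : Q`_0 = 0 by rewrite coef_pol0.
exists g, (fun k => Q`_k); split.
- split => //; exists f => //.
- set z := f (e n 1).
  have : (pol (g z))`_1 = 1 by rewrite /z fg coef_pol_e.
  rewrite {1}(rowdec _ z) lin_sum // pol_sum coef_sum (bigD1 (Ordinal n0)) //=.
  rewrite big1 ?addr0; last first.
    move=> i hi; rewrite linZ // polZ coefZ pow_coef //; last by rewrite ltn_ord.
    rewrite coef_pow_gt ?mulr0 // ltnS lt0n; apply/eqP => h0.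
    by case/eqP: hi; apply: val_inj.
  rewrite linZ // polZ coefZ -/Q => h; apply/eqP => q1; move: h.
  by rewrite q1 mulr0 => /eqP; rewrite eq_sym oner_eq0.
- rewrite {1}[g (e n 1)](rowdec n); apply: eq_bigr => i _; by rewrite /Q coef_pol_ord.
move=> t /andP[t2 tn].
have t0 : (0 < t <= n)%N by rewrite tn andbT ltnW.
have Y1 : (Q ^+ 2)`_1 = 0 by rewrite coef_pow_gt.
have e2 : forall b : 'I_n, g (e n 2) 0 b = (Q ^+ 2)`_b.+1.
  by move=> b; rewrite -coef_pol_ord pow_coef // n2.
have R : (pol (brTP alpha (g (e n 1)) (g (e n 2))))`_t =
   \sum_(2 <= j < t.+1) \sum_(1 <= i < (t - j + 1).+1)
             ((t + 3)%:R - (2 * i + j)%:R) * Q`_i * compSum (fun k => Q`_k) 2 (t + 3 - (i + j))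
               * alpha j.
  rewrite coef_brTP //.
  under eq_bigr => a _ do under eq_bigr => b _ do rewrite e2 -/Q -(coef_pol_ord _ (g (e n 1))) -/Q.
  have t2n : (2 <= t <= n)%N by rewrite t2 tn.
  etransitivity; first exact: (@reindex (fun k => Q`_k) (fun k => (Q ^+ 2)`_k) alpha n t t2n Y1).
  apply: eq_big_nat => j hj; apply: eq_big_nat => i hi.
  by rewrite compSum_coef.
rewrite -R -gb brTP_e12 // /brE /= ifT; last exact: n2.
rewrite linZ // polZ coefZ lin_sum // pol_sum coef_sum.
rewrite (_ : (2%:R - 1%:R : CC) = 1) ?mul1r; last by rewrite -natrB.
rewrite (eq_bigr (fun s : 'I_n.+1 => alpha' s * (Q ^+ s)`_t)); last first.
  move=> s hs; have hs' : (0 < s <= n)%N by move: hs (ltn_ord s) => /=; lia.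
  rewrite linZ // polZ coefZ pow_coef //.
  by have -> : (s + 3 - (1 + 2) = s)%N by lia.
rewrite -(big_mkord (fun s => 1 + 2 - 1 <= s)%N (fun s => alpha' s * (Q ^+ s)`_t)).
rewrite [RHS]big_mkcond /= (@sum_restrict_low _ 0 2); last first.
- by move=> s hs; rewrite ifF //; apply/negbTE; rewrite -ltnNge; lia.
- lia.
rewrite [RHS](@sum_restrict _ 2 t.+1); last first.
- by move=> s hs; rewrite ifT ?coef_pow_gt ?mulr0 //; lia.
- lia.
apply: eq_big_nat => s hs; rewrite ifT; last lia.
by rewrite compSum_coef // mulrC.
Qed.
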